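(* Let $L=(\ell_1,\dots,\ell_n)$, $K=(k_1,\dots,k_n)\in\mathbb{R}^n$ with $0<k_i<\ell_i$ for all $i$, and let $X=(x_1,\dots,x_n)\in\mathbb{R}^n$. Then $\mathcal{S}_{L,K}\cap(X+\mathcal{S}_{L,K})\neq\varnothing$ if and only if $|x_i|<\ell_i$ for all $1\le i\le n$ and there exist indices $j,r\in\{1,\dots,n\}$ such that $x_j<\ell_j-k_j$ and $-(\ell_r-k_r)<x_r$.
   Context: $\mathcal{S}_{L,K}=\{(y_1,\dots,y_n)\in\mathbb{R}^n: 0\le y_i<\ell_i \text{ for all } i, \text{ and there exists } j \text{ with } y_j<\ell_j-k_j\}$, and $X+\mathcal{S}_{L,K}=\{X+Y: Y\in\mathcal{S}_{L,K}\}$. *)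

(* Defs.v *)
(* concrete classical reals R. Vectors of R^n are represented
   as functions nat -> R, of which only the coordinates 0..n-1 matter
   (0-based indexing of the paper's indices 1..n). *)
From Stdlib Require Import Reals.
Open Scope R_scope.

Definition in_S (n : nat) (L K Y : nat -> R) : Prop :=
  (forall i, (i < n)%nat -> 0 <= Y i /\ Y i < L i) /\
  (exists j, (j < n)%nat /\ Y j < L j - K j).

Definition in_translate_S (n : nat) (L K X Z : nat -> R) : Prop :=
  exists Y, in_S n L K Y /\ forall i, (i < n)%nat -> Z i = X i + Y i.

(* Main.v *)
Require Import Defs.
From Stdlib Require Import Reals Lra.
Open Scope R_scope.

Theorem mainTheorem12 (n : nat) (L K X : nat -> R)
  (hK : forall i, (i < n)%nat -> 0 < K i /\ K i < L i) :
  (exists Z, in_S n L K Z /\ in_translate_S n L K X Z) <->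
  ((forall i, (i < n)%nat -> Rabs (X i) < L i) /\
   exists j r, (j < n)%nat /\ (r < n)%nat /\
     X j < L j - K j /\ - (L r - K r) < X r).
Proof.
  split.
  - intros [Z [[HZ [j [Hj HZj]]] [Y [[HY [r [Hr HYr]]] HZY]]]].
    split.
    + intros i Hi. destruct (HZ i Hi). destruct (HY i Hi).
      specialize (HZY i Hi). unfold Rabs; destruct (Rcase_abs (X i)); lra.
    + exists j, r. repeat split; auto.
      * destruct (HY j Hj). specialize (HZY j Hj). lra.
      * destruct (HZ r Hr). specialize (HZY r Hr). lra.
  - intros [HX [j [r [Hj [Hr [HXj HXr]]]]]].
    set (Z := fun i => if Rle_dec 0 (X i) then X i else 0).
    exists Z. split.
    + split.
      * intros i Hi. specialize (HX i Hi). destruct (hK i Hi).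
        revert HX; unfold Z, Rabs; destruct (Rle_dec 0 (X i));
        destruct (Rcase_abs (X i)); intros; lra.
      * exists j. split; auto. destruct (hK j Hj). unfold Z.
        destruct (Rle_dec 0 (X j)); lra.
    + exists (fun i => Z i - X i). split.
      * split.
        -- intros i Hi. specialize (HX i Hi). destruct (hK i Hi).
           revert HX; unfold Z, Rabs; destruct (Rle_dec 0 (X i));
           destruct (Rcase_abs (X i)); intros; lra.
        -- exists r. split; auto. destruct (hK r Hr). unfold Z.
           destruct (Rle_dec 0 (X r)); lra.
      * intros i Hi. ring.
Qed.
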